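(* For all $\mu,\nu\in\mathcal P(\mathcal X)$, the operator $\mathrm{Id}-K_{\mu,\nu}K_{\nu,\mu}$ is a well-defined continuous linear bijection of $C(\mathcal X)/\mathbb R$ (invertible on $C(\mathcal X)/\mathbb R$).
   Context: $(\mathcal X,\mathsf d)$ compact metric space; $\varepsilon>0$; $c\in C(\mathcal X\times\mathcal X)$ symmetric, nonnegative, with $\exp(-c/\varepsilon)$ a positive definite universal kernel. Schrödinger potentials: $T_\varepsilon(f,\mu)(y):=-\varepsilon\log\int\exp((f(x)-c(x,y))/\varepsilon)d\mu(x)$; $(f_{\mu,\nu},f_{\nu,\mu})$ the unique continuous pair with $f_{\mu,\nu}=T_\varepsilon(f_{\nu,\mu},\nu)$, $f_{\nu,\mu}=T_\varepsilon(f_{\mu,\nu},\mu)$, $\int f_{\mu,\nu}d\mu=\int f_{\nu,\mu}d\nu$. $k_{\mu,\nu}(x,y):=\exp((f_{\mu,\nu}(x)+f_{\nu,\mu}(y)-c(x,y))/\varepsilon)$; $H_{\mu,\nu}[\sigma](x):=\int k_{\mu,\nu}(x,y)d\sigma(y)$ for $\sigma\in\mathcal M(\mathcal X)$; $K_{\mu,\nu}[\phi]:=H_{\mu,\nu}[\phi\nu]$ for $\phi\in C(\mathcal X)$ (so $K_{\mu,\nu}[1]=1$). $C(\mathcal X)/\mathbb R$ carries the quotient norm $\inf_{\lambda}\|\phi-\lambda\|_\infty$. *)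

(* Defs.v *)
From HB Require Import structures.
From mathcomp Require Import all_boot all_order all_algebra.
From mathcomp Require Import all_classical all_reals all_analysis.

Set Implicit Arguments.
Unset Strict Implicit.
Unset Printing Implicit Defensive.

Import Order.TTheory GRing.Theory Num.Theory.
Import numFieldNormedType.Exports.

Local Open Scope classical_set_scope.
Local Open Scope ring_scope.

Notation borelType T := (g_sigma_algebraType (@open T)).

Section Defs.
Variable R : realType.
Variable T : pseudoPMetricType R.

Definition supnorm (phi : T -> R) : R := sup [set `|phi x| | x in [set: T]].

Definition qnorm (phi : T -> R) : R :=
  inf [set supnorm (fun x => phi x - l) | l in [set: R]].

Definition pos_def_kernel (k : T -> T -> R) : Prop :=
  forall (n : nat) (xs : 'I_n -> T) (a : 'I_n -> R),
    0 <= \sum_(i < n) \sum_(j < n) a i * a j * k (xs i) (xs j).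

Definition universal_kernel (k : T -> T -> R) : Prop :=
  forall phi : T -> R, continuous phi ->
  forall e : R, 0 < e ->
  exists n (xs : 'I_n -> T) (a : 'I_n -> R),
    forall x, `|phi x - \sum_(i < n) a i * k x (xs i)| < e.

Definition Tsch (eps : R) (c : T -> T -> R) (f : T -> R)
  (mu : probability (borelType T) R) : T -> R :=
  fun y => - eps * ln (Rintegral mu [set: borelType T]
                         (fun x => expR ((f x - c x y) / eps))).

(* k(x,y) = exp((f x + g y - c x y)/eps); with (f,g) = (f_{mu,nu}, f_{nu,mu})
   this is k_{mu,nu}, with (f,g) = (f_{nu,mu}, f_{mu,nu}) it is k_{nu,mu}. *)
Definition kern (eps : R) (c : T -> T -> R) (f g : T -> R) : T -> T -> R :=
  fun x y => expR ((f x + g y - c x y) / eps).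

Definition Kop (eps : R) (c : T -> T -> R) (f g : T -> R)
  (nu : probability (borelType T) R) (phi : T -> R) : T -> R :=
  fun x => Rintegral nu [set: borelType T] (fun y => kern eps c f g x y * phi y).

End Defs.

(* Main.v *)
Require Import Defs.
From HB Require Import structures.
From mathcomp Require Import all_boot all_order all_algebra.
From mathcomp Require Import all_classical all_reals all_analysis.
From mathcomp Require Import measurable_realfun.
From mathcomp Require Import ring lra.
Set Implicit Arguments.
Unset Strict Implicit.
Unset Printing Implicit Defensive.
Import Order.TTheory GRing.Theory Num.Theory.
Import numFieldNormedType.Exports.
Local Open Scope classical_set_scope.
Local Open Scope ring_scope.
Section G.
Variable R : realType.
Variable T : pseudoPMetricType R.
Hypothesis cT : compact [set: T].

Lemma cmeas (u : T -> R) : continuous u -> measurable_fun [set: borelType T] (u : borelType T -> R).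
Proof.
move=> cu; apply: (measurability _ (RGenOpens.measurableE R)).
move=> _ [_ [a [b ->]] <-]; apply: sub_sigma_algebra.
rewrite setTI; apply: (continuousP _).1 => //; exact: interval_open.
Qed.

Lemma cbound (u : T -> R) : continuous u -> exists B, forall x, `|u x| <= B.
Proof.
move=> cu.
have [||c _ hc] := @compact_EVT_max T R (fun x => `|u x|) setT _ cT.
- by exists point.
- by apply: continuous_subspaceT => x; apply: continuous_comp (cu x) _; exact: norm_continuous.
by exists `|u c| => x; apply: hc; rewrite inE.
Qed.

Lemma cint (rho : probability (borelType T) R) (u : T -> R) : continuous u ->
  rho.-integrable [set: borelType T] (EFin \o u).
Proof.
move=> cu; have [B hB] := cbound cu.
apply: (@le_integrable _ _ _ rho _ _ (EFin \o u) (EFin \o cst B)) => //.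
- by apply/measurable_EFinP; exact: cmeas.
- by move=> x _ /=; rewrite lee_fin (le_trans (hB x)) ?ler_norm.
- exact: finite_measure_integrable_cst.
Qed.

Lemma contM (u v : T -> R) : continuous u -> continuous v -> continuous (fun y => u y * v y).
Proof. by move=> cu cv y; exact: (continuousM (cu y) (cv y)). Qed.
Lemma contD (u v : T -> R) : continuous u -> continuous v -> continuous (fun y => u y + v y).
Proof. by move=> cu cv y; exact: (continuousD (cu y) (cv y)). Qed.
Lemma contN (u : T -> R) : continuous u -> continuous (fun y => - u y).
Proof. by move=> cu y; exact: (continuousN (cu y)). Qed.
Lemma contB (u v : T -> R) : continuous u -> continuous v -> continuous (fun y => u y - v y).
Proof. by move=> cu cv; apply: contD => //; apply: contN. Qed.
Lemma contC (r : R) : continuous (fun _ : T => r).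
Proof. by move=> y; apply: cst_continuous. Qed.
Lemma contA (u : T -> R) : continuous u -> continuous (fun y => `|u y|).
Proof. by move=> cu y; apply: continuous_comp (cu y) _; exact: norm_continuous. Qed.

Variable rho : probability (borelType T) R.
Local Notation Int u := (Rintegral rho [set: borelType T] u).

Lemma intD (u v : T -> R) : continuous u -> continuous v -> Int (fun y => u y + v y) = Int u + Int v.
Proof. by move=> cu cv; apply: RintegralD => //; apply: cint. Qed.
Lemma intB (u v : T -> R) : continuous u -> continuous v -> Int (fun y => u y - v y) = Int u - Int v.
Proof. by move=> cu cv; apply: RintegralB => //; apply: cint. Qed.
Lemma intZ (a : R) (u : T -> R) : continuous u -> Int (fun y => a * u y) = a * Int u.
Proof. by move=> cu; apply: RintegralZl => //; apply: cint. Qed.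
Lemma intC (r : R) : Int (fun _ => r) = r.
Proof. rewrite Rintegral_cst//; have := probability_setT rho; move=> /= h. by rewrite [X in fine X]h mulr1. Qed.
Lemma int_le (u v : T -> R) : continuous u -> continuous v -> (forall y, u y <= v y) -> Int u <= Int v.
Proof. by move=> cu cv h; apply: le_Rintegral => //; apply: cint. Qed.
Lemma int_norm (u : T -> R) : continuous u -> `|Int u| <= Int (fun y => `|u y|).
Proof. by move=> cu; apply: le_normr_Rintegral => //; apply: cint. Qed.

Section M.
Variable k : T -> T -> R.
Hypothesis kc : continuous (fun p : T * T => k p.1 p.2).

Lemma sec_cont x : continuous (k x).
Proof.
move=> y.
have -> : k x = (fun p : T * T => k p.1 p.2) \o (fun y => (x, y)) by [].
apply: continuous_comp; last exact: kc.
by apply: cvg_pair => /=; [exact: cvg_cst | exact: cvg_id].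
Qed.

Lemma equi (x0 : T) (e : R) : 0 < e -> \forall x \near x0, forall y, `|k x y - k x0 y| < e.
Proof.
move=> e0.
have H : forall y : T, [set: T] y -> \forall y' \near y & i \near x0, `|k i y' - k x0 y'| < e.
  move=> y Ty.
  have H1 : \forall p \near (x0, y), `|k x0 y - k p.1 p.2| < e/2.
    by move/cvgrPdist_lt: (@kc (x0,y)); apply; rewrite divr_gt0.
  case: H1 => -[U V] /= [nU nV] UV.
  exists (V, U) => //= -[y' i] /= [Vy' Ui].
  have h1 := UV (i, y') (conj Ui Vy').
  have h2 := UV (x0, y') (conj (nbhs_singleton nU) Vy').
  rewrite /= in h1 h2.
  rewrite (_ : k i y' - k x0 y' = (k x0 y - k x0 y') - (k x0 y - k i y')); last by ring.
  rewrite (le_lt_trans (ler_normB _ _))// (splitr e) ltrD//.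
have := (compact_near_coveringP setT).1 cT T (nbhs x0) (fun x y => `|k x y - k x0 y| < e) _ H.
move=> /(_ (nbhs_filter x0)) H2; near=> x => y; exact: (near H2 x) y I.
Unshelve. all: end_near.
Qed.

Definition Mop (phi : T -> R) : T -> R := fun x => Int (fun y => k x y * phi y).

Lemma Mcont phi : continuous phi -> continuous (Mop phi).
Proof.
move=> cphi x0; have [B hB] := cbound cphi.
have B0 : 0 <= B by exact: le_trans (hB x0).
apply/cvgrPdist_lt => e e0.
have e'0 : 0 < e / 2 / (B + 1) by rewrite !divr_gt0 //; lra.
near=> x.
have hx := near (equi x0 e'0) x.
rewrite /Mop -intB; last 2 first.
  by apply: contM => //; exact: sec_cont.
  by apply: contM => //; exact: sec_cont.
apply: le_lt_trans (int_norm _) _.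
  by apply: contB; apply: contM => //; exact: sec_cont.
apply: (@le_lt_trans _ _ (Int (fun _ => e / 2))).
  apply: int_le; last first.
  - move=> y; rewrite -mulrBl normrM.
    have h1 : `|k x0 y - k x y| <= e / 2 / (B + 1).
      by rewrite distrC; apply: ltW; apply: (hx _).
    apply: (@le_trans _ _ (e / 2 / (B + 1) * (B + 1))); last first.
      by rewrite divfK //; apply: lt0r_neq0; lra.
    apply: ler_pM => //; rewrite (le_trans (hB y)) //; lra.
  - exact: contC.
  - by apply: contA; apply: contB; apply: contM => //; exact: sec_cont.
rewrite intC; lra.
Unshelve. all: end_near.
Qed.

Lemma contK x (u : T -> R) : continuous u -> continuous (fun y => k x y * u y).
Proof. by move=> cu; apply: contM => //; exact: sec_cont. Qed.

Lemma Mlin (a : R) (u v : T -> R) : continuous u -> continuous v ->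
  Mop (fun y => a * u y + v y) = (fun x => a * Mop u x + Mop v x).
Proof.
move=> cu cv; apply/funext => x; rewrite /Mop.
rewrite (_ : (fun y => k x y * (a * u y + v y)) = (fun y => a * (k x y * u y) + k x y * v y)); last first.
  by apply/funext => y; ring.
rewrite intD ?intZ //; last 2 first.
- by apply: contM; [exact: contC| exact: contK].
- exact: contK.
- exact: contK.
Qed.

Lemma MB (u v : T -> R) x : continuous u -> continuous v ->
  Mop (fun y => u y - v y) x = Mop u x - Mop v x.
Proof.
move=> cu cv; rewrite /Mop.
rewrite (_ : (fun y => k x y * (u y - v y)) = (fun y => k x y * u y - k x y * v y)); last first.
  by apply/funext => y; ring.
by rewrite intB //; exact: contK.
Qed.

Lemma MD (u v : T -> R) x : continuous u -> continuous v ->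
  Mop (fun y => u y + v y) x = Mop u x + Mop v x.
Proof.
move=> cu cv; rewrite /Mop.
rewrite (_ : (fun y => k x y * (u y + v y)) = (fun y => k x y * u y + k x y * v y)); last first.
  by apply/funext => y; ring.
by rewrite intD //; exact: contK.
Qed.

Hypothesis knorm : forall x, Int (fun y => k x y) = 1.
Lemma Mcst x (l : R) : Mop (fun _ => l) x = l.
Proof.
rewrite /Mop (_ : (fun y => k x y * l) = (fun y => l * k x y)); last first.
  by apply/funext => y; ring.
by rewrite intZ ?knorm ?mulr1 //; exact: sec_cont.
Qed.

Variable delta : R.
Hypothesis delta0 : 0 <= delta.
Hypothesis kdelta : forall x y, delta <= k x y.

Lemma Msplit x (u : T -> R) : continuous u ->
  Mop u x = Int (fun y => (k x y - delta) * u y) + delta * Int u.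
Proof.
move=> cu; rewrite -intZ // -intD; last 2 first.
- by apply: contM => //; apply: contB; [exact: sec_cont| exact: contC].
- by apply: contM => //; exact: contC.
- by rewrite /Mop; congr Rintegral; apply/funext => y; ring.
Qed.

Lemma Mc x (c : R) : Int (fun y => (k x y - delta) * c) = (1 - delta) * c.
Proof.
rewrite (_ : (fun y => (k x y - delta) * c) = (fun y => c * k x y - c * delta)); last first.
  by apply/funext => y; ring.
rewrite intB ?intZ ?intC ?knorm.
all: first [ring | exact: sec_cont | exact: contC | by apply: contM; [exact: contC| exact: sec_cont]].
Qed.

Lemma Mbound (u : T -> R) (lo w : R) : continuous u ->
  (forall y, lo <= u y <= lo + w) -> forall x,
  delta * Int u + (1 - delta) * lo <= Mop u x <= delta * Int u + (1 - delta) * (lo + w).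
Proof.
move=> cu hu x; rewrite Msplit // -!(Mc x).
have ckd : continuous (fun y => k x y - delta) by apply: contB; [exact: sec_cont| exact: contC].
apply/andP; split; [rewrite [X in _ <= X]addrC|rewrite [X in X <= _]addrC]; rewrite lerD2l; apply: int_le.
- by apply: contM => //; exact: contC.
- by apply: contM.
- move=> y; apply: ler_wpM2l; first by rewrite subr_ge0.
  by case/andP: (hu y).
- by apply: contM.
- by apply: contM => //; exact: contC.
- move=> y; apply: ler_wpM2l; first by rewrite subr_ge0.
  by case/andP: (hu y).
Qed.
End M.
End G.
Section Abs.
Variable R : realType.
Variable T : pseudoPMetricType R.
Hypothesis cT : compact [set: T].

Lemma cbound' (u : T -> R) : continuous u -> exists B, forall x, `|u x| <= B.
Proof.
move=> cu.
have [||c _ hc] := @compact_EVT_max T R (fun x => `|u x|) setT _ cT.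
- by exists point.
- by apply: continuous_subspaceT => x; apply: continuous_comp (cu x) _; exact: norm_continuous.
by exists `|u c| => x; apply: hc; rewrite inE.
Qed.

Lemma acontB (u v : T -> R) : continuous u -> continuous v -> continuous (fun y => u y - v y).
Proof. by move=> cu cv y; exact: (continuousD (cu y) (continuousN (cv y))). Qed.
Lemma acontD (u v : T -> R) : continuous u -> continuous v -> continuous (fun y => u y + v y).
Proof. by move=> cu cv y; exact: (continuousD (cu y) (cv y)). Qed.
Lemma acontC (r : R) : continuous (fun _ : T => r).
Proof. by move=> y; apply: cst_continuous. Qed.

Lemma sup_hs (v : T -> R) : continuous v -> has_sup [set `|v x| | x in [set: T]].
Proof.
move=> cv; have [B hB] := cbound' cv; split; first by exists `|v point|, point.
by exists B => _ [x _ <-].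
Qed.

Lemma supn_ge (v : T -> R) x : continuous v -> `|v x| <= supnorm v.
Proof. by move=> cv; apply: sup_upper_bound; [exact: sup_hs| exists x]. Qed.

Lemma supn_le (v : T -> R) b : (forall x, `|v x| <= b) -> supnorm v <= b.
Proof.
move=> h; apply: ge_sup; first by exists `|v point|, point.
by move=> _ [x _ <-].
Qed.

Lemma qn_le (u : T -> R) lo w : continuous u -> (forall x, lo <= u x <= lo + w) -> qnorm u <= w / 2.
Proof.
move=> cu h; apply: (@le_trans _ _ (supnorm (fun x => u x - (lo + w / 2)))).
  apply: ge_inf; last by exists (lo + w/2).
  exists 0 => _ [l _ <-]; apply: le_trans (supn_ge point _) => //.
  by apply: acontB => //; exact: acontC.
apply: supn_le => x; have /andP[h1 h2] := h x.
rewrite ler_norml; apply/andP; split; lra.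
Qed.


Lemma qn_lt (u : T -> R) d : continuous u -> qnorm u < d -> exists l, forall x, `|u x - l| < d.
Proof.
move=> cu hd.
have hi : has_inf [set supnorm (fun x => u x - l) | l in [set: R]].
  split; first by exists (supnorm (fun x => u x - 0)), 0.
  exists 0 => _ [l _ <-]; apply: le_trans (supn_ge point _) => //.
  by apply: acontB => //; exact: acontC.
have hd' : 0 < d - qnorm u by rewrite subr_gt0.
have [_ [l _ <-] hl] := inf_adherent hd' hi.
have cul : continuous (fun x => u x - l) by apply: acontB => //; exact: acontC.
exists l => x; apply: le_lt_trans (supn_ge x cul) _.
by move: hl; rewrite /qnorm addrC subrK.
Qed.

Variable P : (T -> R) -> (T -> R).
Variable th : R.
Hypothesis th0 : 0 <= th.
Hypothesis th1 : th < 1.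
Hypothesis Pc : forall u : T -> R, continuous u -> continuous (P u).
Hypothesis PB : forall (u v : T -> R) x, continuous u -> continuous v ->
  P (fun y => u y - v y) x = P u x - P v x.
Hypothesis PD : forall (u v : T -> R) x, continuous u -> continuous v ->
  P (fun y => u y + v y) x = P u x + P v x.
Hypothesis Posc : forall (u : T -> R) (lo w : R), continuous u -> (forall y, lo <= u y <= lo + w) ->
  exists lo', forall x, lo' <= P u x <= lo' + th * w.

Lemma P0 x : P (fun _ => 0) x = 0.
Proof.
rewrite -[RHS](subrr (P (fun _ => 0) x)) -PB; try exact: acontC.
by congr P; apply/funext => y; rewrite subrr.
Qed.

Lemma Aqcont u d : continuous u -> 0 < d -> qnorm u < d ->
  qnorm (fun x => u x - P u x) <= 2 * d.
Proof.
move=> cu d0 /(qn_lt cu) [l hl].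
have hu : forall y, l - d <= u y <= (l - d) + 2 * d.
  move=> y; have := hl y; rewrite ltr_norml => /andP[h1 h2]; apply/andP; split; lra.
have [lo' hlo] := Posc cu hu.
apply: (@le_trans _ _ ((2 * d + th * (2 * d)) / 2)).
  apply: (@qn_le _ (l - d - lo' - th * (2 * d))).
    by apply: acontB => //; exact: Pc.
  move=> x; have /andP[h1 h2] := hu x; have /andP[h3 h4] := hlo x.
  apply/andP; split; lra.
have : th * d <= d by rewrite ler_piMl // ltW.
lra.
Qed.

Lemma Ainj phi l : continuous phi -> (forall x, phi x - P phi x = l) ->
  exists c, phi = fun=> c.
Proof.
move=> cphi hl.
have [||xM _ hM] := @compact_EVT_max T R phi setT _ cT.
- by exists point.
- exact: continuous_subspaceT.
have [||xm _ hm] := @compact_EVT_min T R phi setT _ cT.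
- by exists point.
- exact: continuous_subspaceT.
have hM' : forall x, phi x <= phi xM by move=> x; apply: hM; rewrite inE.
have hm' : forall x, phi xm <= phi x by move=> x; apply: hm; rewrite inE.
have hu : forall y, phi xm <= phi y <= phi xm + (phi xM - phi xm).
  by move=> y; rewrite addrC subrK hm' hM'.
have [lo' hlo] := Posc cphi hu.
have e1 := hl xM; have e2 := hl xm.
have /andP[h1 h2] := hlo xM; have /andP[h3 h4] := hlo xm.
have w0 : phi xM - phi xm <= th * (phi xM - phi xm) by lra.
have w1 : phi xM - phi xm <= 0.
  have : (1 - th) * (phi xM - phi xm) <= 0 by lra.
  by rewrite pmulr_rle0 // subr_gt0.
exists (phi xm); apply/funext => x.
have := hM' x; have := hm' x; lra.
Qed.

Section Surj.
Variable psi : T -> R.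
Hypothesis cpsi : continuous psi.
Let x0 : T := point.
Let h0 : T -> R := fun x => psi x - psi x0.

Fixpoint hs (n : nat) : T -> R :=
  if n is m.+1 then (fun x => P (hs m) x - P (hs m) x0) else h0.

Lemma hs_c n : continuous (hs n).
Proof.
elim: n => [|n IH] /=; first by apply: acontB => //; exact: acontC.
by apply: acontB; [exact: Pc | exact: acontC].
Qed.

Lemma hs_x0 n : hs n x0 = 0.
Proof. by case: n => [|n] /=; rewrite /h0 subrr. Qed.

Let B : R := xget 0 [set B : R | forall x, `|psi x| <= B].
Lemma hB x : `|psi x| <= B.
Proof.
rewrite /B; case: xgetP => [B' _ /(_ x) //|hn].
by have [B' hB'] := cbound' cpsi; have := hn B'.
Qed.
Let w0 := 2 * B.
Lemma w0_ge0 : 0 <= w0.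
Proof. by have := hB x0; rewrite /w0 => h; have := normr_ge0 (psi x0); lra. Qed.

Lemma hs_osc n : exists lo, forall y, lo <= hs n y <= lo + th ^+ n * w0.
Proof.
elim: n => [|n [lo IH]].
  exists (- B - psi x0) => y /=; rewrite expr0 mul1r /h0 /w0.
  have := hB y; rewrite ler_norml => /andP[h1 h2]; apply/andP; split; lra.
have [lo' hlo] := Posc (hs_c (n:=n)) IH.
exists (lo' - P (hs n) x0) => y /=; rewrite exprS -mulrA.
have /andP[h1 h2] := hlo y; apply/andP; split; lra.
Qed.

Lemma hs_bnd n y : `|hs n y| <= th ^+ n * w0.
Proof.
have [lo h] := hs_osc n; have := h y; have := h x0; rewrite hs_x0.
move=> /andP[h1 h2] /andP[h3 h4]; rewrite ler_norml; apply/andP; split; lra.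
Qed.

Let t (N : nat) : R := th ^+ N * w0 / (1 - th).
Lemma th1' : 0 < 1 - th. Proof. by rewrite subr_gt0. Qed.
Lemma th1n : (1 - th != 0). Proof. by apply: lt0r_neq0; exact: th1'. Qed.
Lemma t_ge0 N : 0 <= t N.
Proof. apply: divr_ge0; last exact: ltW th1'. by rewrite mulr_ge0 ?exprn_ge0 ?w0_ge0. Qed.
Lemma tS N : t N = th ^+ N * w0 + t N.+1.
Proof. rewrite /t exprS; field; exact: th1n. Qed.
Lemma t_ge N : th ^+ N * w0 <= t N.
Proof.
rewrite /t ler_pdivlMr; last exact: th1'.
apply: ler_piMr.
  by rewrite mulr_ge0 ?exprn_ge0 ?w0_ge0.
by rewrite lerBlDr lerDl.
Qed.

Let S (N : nat) : T -> R := fun y => \sum_(n < N) hs n y.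

Lemma S0 : S 0 = fun _ => 0.
Proof. by apply/funext => y; rewrite /S big_ord0. Qed.
Lemma SS N : S N.+1 = fun y => S N y + hs N y.
Proof. by apply/funext => y; rewrite /S big_ord_recr. Qed.

Lemma S_c N : continuous (S N).
Proof.
elim: N => [|N IH]; first by rewrite S0; exact: acontC.
rewrite SS; apply: acontD => //; exact: hs_c.
Qed.

Lemma S_inc N y : S N y - t N <= S N.+1 y - t N.+1.
Proof.
rewrite SS (tS N); have := hs_bnd N y; rewrite ler_norml => /andP[h1 h2]; lra.
Qed.
Lemma S_dec N y : S N.+1 y + t N.+1 <= S N y + t N.
Proof.
rewrite SS (tS N); have := hs_bnd N y; rewrite ler_norml => /andP[h1 h2]; lra.
Qed.
Lemma S_incM M k y : S M y - t M <= S (M + k)%N y - t (M + k)%N.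
Proof.
elim: k => [|k IH]; first by rewrite addn0.
by rewrite addnS; apply: le_trans IH _; exact: S_inc.
Qed.
Lemma S_decM M k y : S (M + k)%N y + t (M + k)%N <= S M y + t M.
Proof.
elim: k => [|k IH]; first by rewrite addn0.
by rewrite addnS; apply: le_trans _ IH; exact: S_dec.
Qed.
Lemma S_cross M N y : S M y - t M <= S N y + t N.
Proof.
have tN := t_ge0 N; have tM := t_ge0 M.
case: (leqP M N) => hMN.
  have := S_incM M (N - M) y; rewrite subnKC // => h.
  apply: le_trans h _; rewrite lerD2l -subr_ge0 opprK; exact: addr_ge0.
have := S_decM N (M - N) y; rewrite subnKC; last exact: ltnW.
move=> h.
apply: le_trans h; rewrite lerD2l -subr_ge0 opprK; exact: addr_ge0.
Qed.

Let phi (y : T) : R := sup [set S N y - t N | N in [set: nat]].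

Lemma phi_hs y : has_sup [set S N y - t N | N in [set: nat]].
Proof.
split; first by exists (S 0 y - t 0), 0%N.
by exists (S 0 y + t 0) => _ [N _ <-]; exact: S_cross.
Qed.
Lemma phi_lo N y : S N y - t N <= phi y.
Proof. by apply: sup_upper_bound; [exact: phi_hs | exists N]. Qed.
Lemma phi_hi N y : phi y <= S N y + t N.
Proof.
apply: ge_sup; first by exists (S 0 y - t 0), 0%N.
by move=> _ [M _ <-]; exact: S_cross.
Qed.
Lemma phi_near N y : `|phi y - S N y| <= t N.
Proof.
rewrite ler_norml; have := phi_lo N y; have := phi_hi N y.
move=> h1 h2; apply/andP; split; lra.
Qed.

Lemma t_small e : 0 < e -> exists N, t N < e.
Proof.
move=> e0.
have hth : `|th| < 1 by rewrite ger0_norm.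
have e'0 : 0 < e * (1 - th) / (w0 + 1).
  by rewrite divr_gt0 ?mulr_gt0 ?th1' //; have := w0_ge0; lra.
case: (cvgr0_norm_lt _ (cvg_expr hth) _ e'0) => N _ hN.
exists N; have := hN N (leqnn N); rewrite /= ger0_norm ?exprn_ge0 // => h.
rewrite /t ltr_pdivrMr ?th1' //.
have h' : th ^+ N * (w0 + 1) < e * (1 - th).
  by rewrite -ltr_pdivlMr //; have := w0_ge0; lra.
apply: le_lt_trans h'; apply: ler_wpM2l; first exact: exprn_ge0.
by rewrite lerDl.
Qed.

Lemma phi_c : continuous phi.
Proof.
move=> x; apply/cvgrPdist_lt => e e0.
have e3 : 0 < e / 3 by rewrite divr_gt0.
have [N hN] := t_small e3.
have := @S_c N x; move/cvgrPdist_lt/(_ (e/3) e3).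
apply: filterS => y hy.
have := phi_near N x; have := phi_near N y.
move: hy; rewrite !ltr_norml !ler_norml.
move=> /andP[h1 h2] /andP[h3 h4] /andP[h5 h6]; apply/andP; split; lra.
Qed.

Let C (N : nat) : R := \sum_(n < N) P (hs n) x0.

Lemma key N y : S N y - P (S N) y = h0 y - hs N y - C N.
Proof.
elim: N y => [|N IH] y.
  by rewrite S0 P0 /C big_ord0 /= !subrr.
rewrite SS PD; [|exact: S_c|exact: hs_c].
rewrite /C big_ord_recr /=.
have := IH y; rewrite /C => h; lra.
Qed.

Lemma D_eq y : phi y - P phi y - h0 y = phi x0 - P phi x0 - h0 x0.
Proof.
apply/eqP; rewrite -subr_eq0; apply/eqP.
set a := _ - _.
apply/eqP; apply: contraT => ha.
have a0 : 0 < `|a| / 5 by rewrite divr_gt0 // normr_gt0.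
have [N hN] := t_small a0.
pose e := fun z => phi z - S N z.
have ce : continuous e by apply: acontB; [exact: phi_c| exact: S_c].
have hPe z : P e z = P phi z - P (S N) z := PB z phi_c (S_c (N:=N)).
have he : forall z, - t N <= e z <= - t N + 2 * t N.
  move=> z; have := phi_near N z; rewrite ler_norml /e => /andP[h1 h2].
  apply/andP; split; lra.
have [lo hlo] := Posc ce he.
have k1 := key N y; have k2 := key N x0.
have hb := hs_bnd N y; have tg := t_ge N; have hx := hs_x0 N.
have := phi_near N y; have := phi_near N x0.
have := hlo y; have := hlo x0; have := he y; have := he x0.
rewrite /e in hPe *.
have := hPe y; have := hPe x0.
move: hb; rewrite !ler_norml.
move=> /andP[b1 b2] p1 p2 /andP[e1 e2] /andP[e3 e4] /andP[l1 l2] /andP[l3 l4] /andP[n1 n2] /andP[n3 n4].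
have tt : th * (2 * t N) <= 2 * t N.
  apply: ler_piMl; last exact: ltW.
  by rewrite mulr_ge0 ?t_ge0.
have : `|a| <= 5 * t N.
  rewrite /a ler_norml; apply/andP; split; lra.
have : 5 * t N < `|a| by rewrite mulrC -ltr_pdivlMr.
lra.
Qed.

Lemma surj : exists2 f, continuous f & exists l, forall x, f x - P f x = psi x + l.
Proof.
exists phi; first exact: phi_c.
exists (phi x0 - P phi x0 - h0 x0 - psi x0) => x.
have := D_eq x; rewrite /h0 => h; lra.
Qed.
End Surj.

Lemma abs_all :
  (forall u d, continuous u -> 0 < d -> qnorm u < d ->
     qnorm (fun x => u x - P u x) <= 2 * d) /\
  (forall phi l, continuous phi -> (forall x, phi x - P phi x = l) ->
     exists c, phi = fun=> c) /\
  (forall psi, continuous psi ->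
     exists2 f, continuous f & exists l, forall x, f x - P f x = psi x + l).
Proof.
split; first by move=> u d cu d0 hd; exact: Aqcont.
split; first by move=> phi l cphi hl; exact: Ainj hl.
move=> psi cpsi; have := PD; have := PB; move=> _ _; exact: surj.
Qed.
End Abs.
Section C.
Variable R : realType.
Variable T : pseudoPMetricType R.
Lemma fstc (a : T -> R) : continuous a -> continuous (fun p : T * T => a p.1).
Proof. move=> ca p; apply: continuous_comp (ca p.1); exact: cvg_fst. Qed.
Lemma sndc (a : T -> R) : continuous a -> continuous (fun p : T * T => a p.2).
Proof. move=> ca p; apply: continuous_comp (ca p.2); exact: cvg_snd. Qed.
Lemma kern_cont (eps : R) (c : T -> T -> R) (a b : T -> R) :
  continuous a -> continuous b -> continuous (fun p : T * T => c p.1 p.2) ->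
  continuous (fun p : T * T => kern eps c a b p.1 p.2).
Proof.
move=> ca cb cc p; rewrite /kern.
apply: (@continuous_comp _ _ _ (fun p : T * T => (a p.1 + b p.2 - c p.1 p.2) / eps) expR); last exact: continuous_expR.
apply: cvgM; last exact: cvg_cst.
apply: cvgB; last exact: cc.
by apply: cvgD; [exact: fstc | exact: sndc].
Qed.
End C.

Lemma kern_low (R : realType) (T : pseudoPMetricType R) (eps : R) (c : T -> T -> R) (a b : T -> R) :
  compact [set: T] -> continuous a -> continuous b -> continuous (fun p : T * T => c p.1 p.2) ->
  exists2 d, 0 < d & forall x y, d <= kern eps c a b x y.
Proof.
move=> cT ca cb cc.
have cTT : compact [set: (T * T)%type] by rewrite -setXTT; exact: compact_setX.
have [||p _ hp] := @compact_EVT_min (T * T)%type R (fun p => kern eps c a b p.1 p.2) setT _ cTT.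
- by exists (point, point).
- by apply: continuous_subspaceT; apply: kern_cont.
exists (kern eps c a b p.1 p.2); first exact: expR_gt0.
by move=> x y; apply: (hp (x, y)); rewrite inE.
Qed.

Lemma kern_norm (R : realType) (T : pseudoPMetricType R) (eps : R) (c : T -> T -> R) (a b : T -> R)
  (rho : probability (borelType T) R) :
  compact [set: T] -> 0 < eps -> continuous (fun p : T * T => c p.1 p.2) ->
  (forall x y, c x y = c y x) -> continuous a -> continuous b ->
  b = Tsch eps c a rho -> forall x, \int[rho]_y kern eps c b a x y = 1.
Proof.
move=> cT e0 cc cs ca cb hb x.
have [d d0 hd] := kern_low eps cT cb ca cc.
have ccx : continuous (fun z : T => c z x).
  move=> z; apply: (@continuous_comp _ _ _ (fun z : T => (z, x)) (fun p : T * T => c p.1 p.2)); last exact: cc.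
  by apply: cvg_pair => /=; [exact: cvg_id | exact: cvg_cst].
have cj : continuous (fun z : T => expR ((a z - c z x) / eps)).
  move=> z; apply: (@continuous_comp _ _ _ (fun z : T => (a z - c z x) / eps) expR); last exact: continuous_expR.
  apply: cvgM; last exact: cvg_cst.
  by apply: cvgB; [exact: ca | exact: ccx].
have ck : continuous (fun y => kern eps c b a x y).
  by apply: sec_cont; apply: kern_cont.
have eq1 : (fun y => kern eps c b a x y) = (fun y => expR (b x / eps) * expR ((a y - c y x) / eps)).
  apply/funext => y; rewrite /kern -expRD (cs x y); congr expR.
  by rewrite -mulrDl; congr (_ * _); ring.
have hge : d <= \int[rho]_y kern eps c b a x y.
  rewrite -[X in X <= _](intC rho d); apply: int_le => //; exact: contC.
move: hge; rewrite eq1 intZ // => hge.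
set J := Rintegral _ _ _ in hge *.
have Jpos : 0 < J.
  by have := lt_le_trans d0 hge; rewrite pmulr_rgt0 // expR_gt0.
have hbx : b x / eps = - ln J.
  rewrite {1}hb /Tsch; field; exact: lt0r_neq0.
by rewrite hbx expRN lnK ?posrE // mulVf // gt_eqF.
Qed.
Theorem mainTheorem17 (R : realType) (T : pseudoPMetricType R)
  (eps : R) (c : T -> T -> R)
  (mu nu : probability (borelType T) R) (f g : T -> R) :
  (* X is a compact metric space *)
  hausdorff_space T -> compact [set: T] ->
  (* standing assumptions on eps and c *)
  0 < eps ->
  continuous (fun p : T * T => c p.1 p.2) ->
  (forall x y, c x y = c y x) ->
  (forall x y, 0 <= c x y) ->
  pos_def_kernel (fun x y => expR (- c x y / eps)) ->
  universal_kernel (fun x y => expR (- c x y / eps)) ->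
  (* (f, g) = (f_{mu,nu}, f_{nu,mu}) are the Schrodinger potentials *)
  continuous f -> continuous g ->
  f = Tsch eps c g nu -> g = Tsch eps c f mu ->
  Rintegral mu [set: borelType T] f = Rintegral nu [set: borelType T] g ->
  let A := fun phi : T -> R =>
    (fun x => phi x - Kop eps c f g nu (Kop eps c g f mu phi) x) in
  (* A = Id - K_{mu,nu} K_{nu,mu} maps C(X) into C(X) *)
  (forall phi, continuous phi -> continuous (A phi)) /\
  (* A is linear on C(X) *)
  (forall (a : R) phi psi, continuous phi -> continuous psi ->
     A (fun x => a * phi x + psi x) = (fun x => a * A phi x + A psi x)) /\
  (* A is well defined on C(X)/R *)
  (forall phi psi, continuous phi -> continuous psi ->
     (exists l : R, phi = (fun x => psi x + l)) ->
     exists l' : R, A phi = (fun x => A psi x + l')) /\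
  (* A is continuous for the quotient norm of C(X)/R *)
  (forall phi0, continuous phi0 -> forall e : R, 0 < e ->
     exists2 d : R, 0 < d & forall phi, continuous phi ->
       qnorm (fun x => phi x - phi0 x) < d ->
       qnorm (fun x => A phi x - A phi0 x) < e) /\
  (* A is injective on C(X)/R *)
  (forall phi, continuous phi ->
     (exists l : R, A phi = (fun=> l)) -> exists l : R, phi = (fun=> l)) /\
  (* A is surjective on C(X)/R *)
  (forall psi, continuous psi ->
     exists2 phi, continuous phi & exists l : R, A phi = (fun x => psi x + l)).
Proof.
move=> _ cT e0 cc cs _ _ _ cf cg hf hg _ A.
have kc1 : continuous (fun p : T * T => kern eps c f g p.1 p.2) by apply: kern_cont.
have kc2 : continuous (fun p : T * T => kern eps c g f p.1 p.2) by apply: kern_cont.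
have n1 : forall x, \int[nu]_y kern eps c f g x y = 1.
  exact: (kern_norm cT e0 cc cs cg cf hf).
have n2 : forall x, \int[mu]_y kern eps c g f x y = 1.
  exact: (kern_norm cT e0 cc cs cf cg hg).
have [d1 d1p hd1] := kern_low eps cT cf cg cc.
pose d := Num.min d1 (1 / 2).
have dp : 0 < d by rewrite /d lt_min d1p divr_gt0.
have dle1 : d <= d1 by rewrite /d ge_min lexx.
have dle2 : d <= 1 / 2 by rewrite /d ge_min lexx orbT.
have hd : forall x y, d <= kern eps c f g x y by move=> x y; exact: le_trans dle1 (hd1 x y).
have h0 : forall x y, 0 <= kern eps c g f x y by move=> x y; exact: expR_ge0.
pose K1 := Mop nu (kern eps c f g).
pose K2 := Mop mu (kern eps c g f).
pose P := fun u => K1 (K2 u).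
have AE : forall phi, A phi = fun x => phi x - P phi x by [].
have K2c : forall u, continuous u -> continuous (K2 u).
  move=> u cu; rewrite /K2; have := Mcont (rho:=mu) cT kc2 cu; exact.
have Pc : forall u, continuous u -> continuous (P u).
  move=> u cu; rewrite /P /K1; have := Mcont (rho:=nu) cT kc1 (K2c u cu); exact.
have PB : forall (u v : T -> R) x, continuous u -> continuous v ->
    P (fun y => u y - v y) x = P u x - P v x.
  move=> u v x cu cv; rewrite /P.
  have -> : K2 (fun y => u y - v y) = (fun z => K2 u z - K2 v z).
    by apply/funext => z; have := MB cT mu kc2 z cu cv; rewrite /K1 /K2; exact.
  have := MB cT nu kc1 x (K2c u cu) (K2c v cv); rewrite /K1 /K2; exact.
have PD : forall (u v : T -> R) x, continuous u -> continuous v ->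
    P (fun y => u y + v y) x = P u x + P v x.
  move=> u v x cu cv; rewrite /P.
  have -> : K2 (fun y => u y + v y) = (fun z => K2 u z + K2 v z).
    by apply/funext => z; have := MD cT mu kc2 z cu cv; rewrite /K1 /K2; exact.
  have := MD cT nu kc1 x (K2c u cu) (K2c v cv); rewrite /K1 /K2; exact.
have Posc : forall (u : T -> R) (lo w : R), continuous u ->
    (forall y, lo <= u y <= lo + w) ->
    exists lo', forall x, lo' <= P u x <= lo' + (1 - d) * w.
  move=> u lo w cu hu.
  have hu2 : forall y, lo <= K2 u y <= lo + w.
    move=> y; have := Mbound cT kc2 n2 h0 cu hu y.
    by rewrite !mul0r !add0r !subr0 !mul1r.
  exists (d * \int[nu]_x K2 u x + (1 - d) * lo) => x.
  have := Mbound cT kc1 n1 hd (K2c u cu) hu2 x.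
  rewrite /P /K1 mulrDr addrA; exact.
have th0 : 0 <= 1 - d by rewrite subr_ge0; apply: le_trans dle2 _; lra.
have th1 : 1 - d < 1 by rewrite ltrBlDr ltrDl.
have [Hc [Hi Hs]] := abs_all cT th0 th1 Pc PB PD Posc.
split.
  by move=> phi cphi; rewrite AE; apply: contB => //; exact: Pc.
split.
  move=> a phi psi cphi cpsi; rewrite !AE; apply/funext => x /=.
  have e2 : K2 (fun y => a * phi y + psi y) = fun x => a * K2 phi x + K2 psi x.
    have := Mlin cT mu kc2 a cphi cpsi; rewrite /K1 /K2; exact.
  have e1 : K1 (fun x => a * K2 phi x + K2 psi x) = fun x => a * K1 (K2 phi) x + K1 (K2 psi) x.
    have := Mlin cT nu kc1 a (K2c _ cphi) (K2c _ cpsi); rewrite /K1 /K2; exact.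
  by rewrite /P e2 e1; ring.
split.
  move=> phi psi cphi cpsi [l ->]; exists 0; rewrite !AE; apply/funext => x.
  have e2 : K2 (fun y => psi y + l) = fun x => K2 psi x + l.
    apply/funext => z; have := MD cT mu kc2 z cpsi (contC (r:=l)).
    by rewrite (Mcst cT kc2 n2 z l) /K2; exact.
  have e1 : K1 (fun y => K2 psi y + l) = fun x => K1 (K2 psi) x + l.
    apply/funext => z; have := MD cT nu kc1 z (K2c _ cpsi) (contC (r:=l)).
    by rewrite (Mcst cT kc1 n1 z l) /K1 /K2; exact.
  by rewrite /P e2 e1 addr0 opprD addrACA subrr addr0.
split.
  move=> phi0 cphi0 e ep; exists (e / 4); first by rewrite divr_gt0.
  move=> phi cphi hq.
  have cu : continuous (fun x => phi x - phi0 x) by apply: contB.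
  have -> : (fun x => A phi x - A phi0 x) =
      (fun x => (phi x - phi0 x) - P (fun x => phi x - phi0 x) x).
    by apply/funext => x; rewrite !AE PB //; ring.
  apply: le_lt_trans (Hc _ _ cu _ hq) _; first by rewrite divr_gt0.
  lra.
split.
  move=> phi cphi [l hl]; apply: (Hi phi l cphi) => x.
  by have := congr1 (fun h => h x) hl; rewrite AE.
move=> psi cpsi; have [phi cphi [l hl]] := Hs psi cpsi.
by exists phi => //; exists l; rewrite AE; apply/funext => x; exact: hl.
Qed.
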